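(* Let $q$ be an odd prime power, let $d\in\mathbb{N}$ be even with $d\mid(q-1)$ and $(q-1)/d$ odd. Let $h\in\mathbb{F}_q[x]$, $T(x)=x^{(q-1)/d}$ and $f(x)=x^2h(T(x))$. If $f$ is a permutation polynomial of $\mathbb{F}_q$, then $\delta_f\le 2d^2-\tfrac{3}{2}d$.
   Context: A polynomial $f\in\mathbb{F}_q[x]$ is a permutation polynomial of $\mathbb{F}_q$ if $c\mapsto f(c)$ is a bijection of $\mathbb{F}_q$. For $a\in\mathbb{F}_q^*$, $\Delta_{f,a}(x)=f(x+a)-f(x)$, and the differential uniformity is $\delta_f=\max_{a\in\mathbb{F}_q^*,\,c\in\mathbb{F}_q}|\{x\in\mathbb{F}_q:\Delta_{f,a}(x)=c\}|$. *)

(* Defs.v *)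
From mathcomp Require Import all_boot all_order all_algebra all_field.
Set Implicit Arguments. Unset Strict Implicit. Unset Printing Implicit Defensive.
Import GRing.Theory.
Local Open Scope ring_scope.

Definition is_perm_poly (F : finFieldType) (f : {poly F}) : Prop :=
  injective (fun c : F => f.[c]).

Definition diff_count (F : finFieldType) (f : {poly F}) (a c : F) : nat :=
  #|[set x : F | f.[x + a] - f.[x] == c]|.

Definition diff_unif (F : finFieldType) (f : {poly F}) : nat :=
  \max_(a : F | a != 0) \max_(c : F) diff_count f a c.

(* Main.v *)
Require Import Defs.
From mathcomp Require Import all_boot all_order all_algebra all_field.
From mathcomp Require fingroup pgroup abelian.
From mathcomp Require Import ring zify.
Import GRing.Theory.
Local Open Scope ring_scope.

Lemma two_nz (F : finFieldType) : odd #|F| -> (2:F) != 0.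
Proof.
move=> oddF; apply/negP => /eqP h2.
have ch : (2%N \in [pchar F]) by rewrite inE /= h2 eqxx.
have := abelian.abelem_pgroup (abelian.fin_ring_pchar_abelem ch).
rewrite /pgroup.pgroup cardsT => /p_natP [n hn].
move: oddF (card_finNzRing_gt1 F); rewrite hn.
case: n {hn} => [|n] //=; by rewrite expnS oddM.
Qed.

Lemma oddexpN (F : fieldType) (m : nat) (u : F) : odd m -> (- u) ^+ m = - u ^+ m.
Proof. by move=> om; rewrite exprNn -signr_odd om expr1 mulN1r. Qed.

Lemma core (F : fieldType) (m : nat) (al be a c e x1 x2 y1 y2 xd : F) :
 odd m -> (2:F) != 0 -> al != 0 -> a != 0 -> e != 0 ->
 x1 != x2 -> y1 != y2 ->
 al*(x1+a)^+2 - be*x1^+2 = c -> al*(x2+a)^+2 - be*x2^+2 = c ->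
 be*(y1+a)^+2 - al*y1^+2 = c -> be*(y2+a)^+2 - al*y2^+2 = c ->
 al*(xd+a)^+2 - al*xd^+2 = c ->
 x1^+m = -e -> x2^+m = -e -> (y1+a)^+m = -e -> (y2+a)^+m = -e ->
 xd^+m = e -> (xd+a)^+m = e -> False.
Proof.
move=> om two al0 a0 e0 x12 y12 E1 E2 E3 E4 E5 P1 P2 P3 P4 P5 P6.
have Rx : al*(x1+x2+2*a) - be*(x1+x2) = 0.
  have : (x1 - x2) * (al*(x1+x2+2*a) - be*(x1+x2)) =
     (al*(x1+a)^+2 - be*x1^+2) - (al*(x2+a)^+2 - be*x2^+2) by ring.
  rewrite E1 E2 subrr => /eqP; rewrite mulf_eq0 subr_eq0 (negbTE x12) /=.
  by move/eqP.
have Ry : be*(y1+y2+2*a) - al*(y1+y2) = 0.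
  have : (y1 - y2) * (be*(y1+y2+2*a) - al*(y1+y2)) =
     (be*(y1+a)^+2 - al*y1^+2) - (be*(y2+a)^+2 - al*y2^+2) by ring.
  rewrite E3 E4 subrr => /eqP; rewrite mulf_eq0 subr_eq0 (negbTE y12) /=.
  by move/eqP.
have D0 : al - be != 0.
  apply/negP => /eqP; move/eqP; rewrite subr_eq0 => /eqP Hab.
  move: Rx; rewrite -Hab.
  have -> : al * (x1 + x2 + 2 * a) - al * (x1 + x2) = 2 * a * al by ring.
  by move/eqP; rewrite !mulf_eq0 (negbTE two) (negbTE a0) (negbTE al0).
have E1' : al*(x1+a)^+2 - be*x1^+2 - c = 0 by rewrite E1 subrr.
have E3' : be*(y1+a)^+2 - al*y1^+2 - c = 0 by rewrite E3 subrr.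
have E5' : al*(xd+a)^+2 - al*xd^+2 - c = 0 by rewrite E5 subrr.
have K : (al - be) * ((xd+a)*x1*x2 + xd*((y1+a)*(y2+a))) = 0.
  have -> : (al - be) * ((xd+a)*x1*x2 + xd*((y1+a)*(y2+a))) =
    (xd+a)*(x1*(al*(x1+x2+2*a) - be*(x1+x2)) - (al*(x1+a)^+2 - be*x1^+2 - c))
    + xd*((be*(y1+a)^+2 - al*y1^+2 - c) - y1*(be*(y1+y2+2*a) - al*(y1+y2)))
    - xd*a*(be*(y1+y2+2*a) - al*(y1+y2)) + a*(al*(xd+a)^+2 - al*xd^+2 - c) by ring.
  by rewrite Rx Ry E1' E3' E5' !(mulr0, subr0, addr0, add0r, sub0r, oppr0).
move/eqP: K; rewrite mulf_eq0 (negbTE D0) /= addr_eq0 => /eqP K.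
have := congr1 (fun u => u ^+ m) K; rewrite /= oddexpN // !exprMn P1 P2 P3 P4 P5 P6.
move/eqP; rewrite -subr_eq0 opprK.
have -> : e * - e * - e + e * (- e * - e) = 2 * e^+3 by ring.
by rewrite mulf_eq0 (negbTE two) expf_eq0 (negbTE e0) andbF.
Qed.

Lemma three_elems (T : finType) (S : {set T}) : (2 < #|S|)%N ->
  exists x1 x2 x3, [/\ x1 \in S, x2 \in S, x3 \in S & [/\ x1 != x2, x1 != x3 & x2 != x3]].
Proof.
move=> H.
have /set0Pn [x1 H1] : S != set0 by rewrite -card_gt0; apply: leq_trans H.
have H' : (1 < #|S :\ x1|)%N by rewrite (cardsD1 x1) H1 in H.
have /set0Pn [x2 H2] : S :\ x1 != set0 by rewrite -card_gt0; apply: leq_trans H'.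
have H'' : (0 < #|S :\ x1 :\ x2|)%N by rewrite (cardsD1 x2) H2 in H'.
have /set0Pn [x3 H3] : S :\ x1 :\ x2 != set0 by rewrite -card_gt0.
move: H2 H3; rewrite !inE => /andP [n21 s2] /and3P [n32 n31 s3].
exists x1, x2, x3; split => //; split; by rewrite eq_sym.
Qed.

Lemma two_elems (T : finType) (S : {set T}) : (1 < #|S|)%N ->
  exists x1 x2, [/\ x1 \in S, x2 \in S & x1 != x2].
Proof.
move=> H.
have /set0Pn [x1 H1] : S != set0 by rewrite -card_gt0; apply: leq_trans H.
have H' : (0 < #|S :\ x1|)%N by rewrite (cardsD1 x1) H1 in H.
have /set0Pn [x2 H2] : S :\ x1 != set0 by rewrite -card_gt0.
move: H2; rewrite !inE => /andP [n21 s2].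
by exists x1, x2; split => //; rewrite eq_sym.
Qed.

Lemma card_le2 (F : fieldType) (T : finType) (S : {set T}) (g : T -> F) (A B C : F) :
  injective g ->
  ~~ [&& A == 0, B == 0 & C == 0] ->
  (forall x, x \in S -> A * (g x)^+2 + B * g x + C = 0) -> (#|S| <= 2)%N.
Proof.
move=> ig nz HS; case: (leqP #|S| 2) => // /three_elems [x1 [x2 [x3 [s1 s2 s3 [n12 n13 n23]]]]].
exfalso; move: nz; apply/negP/negPn.
have E1 := HS _ s1; have E2 := HS _ s2; have E3 := HS _ s3.
have d12 : g x1 - g x2 != 0 by rewrite subr_eq0 (inj_eq ig).
have d13 : g x1 - g x3 != 0 by rewrite subr_eq0 (inj_eq ig).
have d23 : g x2 - g x3 != 0 by rewrite subr_eq0 (inj_eq ig).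
have L12 : A * (g x1 + g x2) + B = 0.
  have : (g x1 - g x2) * (A * (g x1 + g x2) + B) =
    (A * (g x1)^+2 + B * g x1 + C) - (A * (g x2)^+2 + B * g x2 + C) by ring.
  by rewrite E1 E2 subrr => /eqP; rewrite mulf_eq0 (negbTE d12) => /eqP.
have L13 : A * (g x1 + g x3) + B = 0.
  have : (g x1 - g x3) * (A * (g x1 + g x3) + B) =
    (A * (g x1)^+2 + B * g x1 + C) - (A * (g x3)^+2 + B * g x3 + C) by ring.
  by rewrite E1 E3 subrr => /eqP; rewrite mulf_eq0 (negbTE d13) => /eqP.
have A0 : A = 0.
  have : A * (g x2 - g x3) = (A * (g x1 + g x2) + B) - (A * (g x1 + g x3) + B) by ring.
  by rewrite L12 L13 subrr => /eqP; rewrite mulf_eq0 (negbTE d23) orbF => /eqP.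
have B0 : B = 0 by move: L12; rewrite A0 mul0r add0r.
have C0 : C = 0 by move: E1; rewrite A0 B0 !mul0r !add0r.
by rewrite A0 B0 C0 !eqxx.
Qed.

Lemma card_le1 (F : fieldType) (T : finType) (S : {set T}) (g : T -> F) (A B : F) :
  injective g -> ~~ ((A == 0) && (B == 0)) ->
  (forall x, x \in S -> A * g x + B = 0) -> (#|S| <= 1)%N.
Proof.
move=> ig nz HS; case: (leqP #|S| 1) => // /two_elems [x1 [x2 [s1 s2 n12]]].
exfalso; move: nz; apply/negP/negPn.
have E1 := HS _ s1; have E2 := HS _ s2.
have d12 : g x1 - g x2 != 0 by rewrite subr_eq0 (inj_eq ig).
have A0 : A = 0.
  have : A * (g x1 - g x2) = (A * g x1 + B) - (A * g x2 + B) by ring.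
  by rewrite E1 E2 subrr => /eqP; rewrite mulf_eq0 (negbTE d12) orbF => /eqP.
by move: E1; rewrite A0 mul0r add0r => ->; rewrite !eqxx.
Qed.

Section Main.
Variables (F : finFieldType) (m : nat) (h : {poly F}) (a c : F).
Hypotheses (om : odd m) (two : (2:F) != 0) (a0 : a != 0).
Hypothesis hnz : forall x : F, x != 0 -> h.[x ^+ m] != 0.

Definition fv (x : F) := x^+2 * h.[x^+m].
Definition Sol := [set x | fv (x+a) - fv x == c].
Definition SS e1 e2 := [set x | (fv (x+a) - fv x == c) && ((x+a)^+m == e1) && (x^+m == e2)].
Definition M := [set x ^+ m | x in [set~ (0%R:F)]].

Lemma m_gt0 : (0 < m)%N. Proof. by case: m om. Qed.

Lemma P0 : (0%R:F) ^+ m = 0. Proof. by rewrite expr0n eqn0Ngt m_gt0. Qed.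

Lemma MP {x} : x != 0 -> x ^+ m \in M.
Proof. by move=> x0; apply: imset_f; rewrite !inE. Qed.

Lemma Mnz {e} : e \in M -> e != 0.
Proof. by case/imsetP => x; rewrite !inE => x0 ->; rewrite expf_eq0 (negbTE x0) andbF. Qed.

Lemma MN {e} : e \in M -> - e \in M.
Proof.
case/imsetP => x; rewrite !inE => x0 ->; rewrite -oddexpN //; apply: MP.
by rewrite oppr_eq0.
Qed.

Lemma Mh {e} : e \in M -> h.[e] != 0.
Proof. by case/imsetP => x; rewrite !inE => x0 ->; apply: hnz. Qed.

Lemma eNe {e} : e \in M -> - e != e.
Proof.
move=> eM; apply/negP => /eqP H.
have : 2 * e = 0 by rewrite mulr2n mulrDl mul1r -{1}H addNr.
by move/eqP; rewrite mulf_eq0 (negbTE two) (negbTE (Mnz eM)).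
Qed.

Lemma SSP e1 e2 x : x \in SS e1 e2 ->
  [/\ h.[e1] * (x+a)^+2 - h.[e2] * x^+2 = c, (x+a)^+m = e1 & x^+m = e2].
Proof.
rewrite inE /fv => /andP [/andP [/eqP E /eqP P1] /eqP P2].
by move: E; rewrite P1 P2 ![_ * h.[_]]mulrC.
Qed.

Lemma SS_le2 e1 e2 : e1 \in M -> (#|SS e1 e2| <= 2)%N.
Proof.
move=> eM; apply: (@card_le2 F F _ id (h.[e1] - h.[e2]) (2 * a * h.[e1]) (h.[e1] * a^+2 - c)).
- by [].
- apply/negP => /and3P [_ /eqP H _]; move/eqP: H.
  by rewrite !mulf_eq0 (negbTE two) (negbTE a0) (negbTE (Mh eM)).
- move=> x /SSP [E _ _]; rewrite -E /=; ring.
Qed.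

Lemma SS_diag {e} : e \in M -> (#|SS e e| <= 1)%N.
Proof.
move=> eM; apply: (@card_le1 F F _ id (2 * a * h.[e]) (h.[e] * a^+2 - c)).
- by [].
- apply/negP => /andP [/eqP H _]; move/eqP: H.
  by rewrite !mulf_eq0 (negbTE two) (negbTE a0) (negbTE (Mh eM)).
- move=> x /SSP [E _ _]; rewrite -E /=; ring.
Qed.

Lemma SS22 {e} : e \in M -> #|SS e (-e)| = 2%N -> #|SS (-e) e| = 2%N -> #|SS e e| = 0%N.
Proof.
move=> eM /eqP/cards2P [x1 [x2 [n12 Hx]]] /eqP/cards2P [y1 [y2 [n12' Hy]]].
apply/eqP; rewrite cards_eq0; apply/eqP/setP => xd; rewrite in_set0; apply/negbTE/negP => Hd.
have : x1 \in SS e (-e) by rewrite Hx set21.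
have : x2 \in SS e (-e) by rewrite Hx set22.
have : y1 \in SS (-e) e by rewrite Hy set21.
have : y2 \in SS (-e) e by rewrite Hy set22.
move=> /SSP [E4 P4 _] /SSP [E3 P3 _] /SSP [E2 _ P2] /SSP [E1 _ P1].
case/SSP: Hd => [E5 P6 P5].
by apply: (@core F m (h.[e]) (h.[-e]) a c e x1 x2 y1 y2 xd om two (Mh eM) a0 (Mnz eM)
  n12 n12' E1 E2 E3 E4 E5 P1 P2 P3 P4 P5 P6).
Qed.

Lemma SS22' {e} : e \in M -> #|SS e (-e)| = 2%N -> #|SS (-e) e| = 2%N -> #|SS (-e) (-e)| = 0%N.
Proof.
move=> eM H1 H2; apply: SS22; first exact: MN.
- by rewrite opprK.
- by rewrite opprK.
Qed.

Definition B e := (#|SS e e| + #|SS e (-e)| + #|SS (-e) e| + #|SS (-e) (-e)|)%N.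

Lemma Bgen e : e \in M -> (B e <= 5)%N.
Proof.
move=> eM; rewrite /B.
have h1 := SS_diag eM; have h2 := SS_diag (MN eM).
have h3 := SS_le2 e (-e) eM; have h4 := SS_le2 (-e) e (MN eM).
have h5 := SS22 eM; have h6 := SS22' eM.
case E3 : (#|SS e (-e)| == 2%N); case E4 : (#|SS (-e) e| == 2%N).
- move/eqP: E3 => E3; move/eqP: E4 => E4.
  have z1 := h5 E3 E4; have z2 := h6 E3 E4; lia.
- move/negbT: E4 => E4; rewrite neq_ltn in E4; lia.
- move/negbT: E3 => E3; rewrite neq_ltn in E3; lia.
- move/negbT: E3 => E3; rewrite neq_ltn in E3; lia.
Qed.

Lemma fv0 : fv 0 = 0. Proof. by rewrite /fv expr0n /= mul0r. Qed.

Lemma block_aux e : e \in M -> a ^+ m = e ->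
  (B e + ((0%R:F) \in Sol) + (-a \in Sol) <= 5)%N.
Proof.
move=> eM ae.
have al0 := Mh eM; have be0 := Mh (MN eM); have e0 := Mnz eM.
have ne0 : - e != 0 by rewrite oppr_eq0.
have c0 : (0%R:F) \in Sol -> c = a^+2 * h.[e].
  by rewrite inE add0r fv0 subr0 /fv ae => /eqP <-.
have c1 : -a \in Sol -> c = - (a^+2 * h.[-e]).
  by rewrite inE addNr fv0 sub0r /fv sqrrN oddexpN // ae => /eqP <-.
have Z1 : (0%R:F) \in Sol -> #|SS e e| = 0%N.
  move=> /c0 C; apply/eqP; rewrite cards_eq0; apply/eqP/setP => x.
  rewrite in_set0; apply/negbTE/negP => /SSP [E P1 P2].
  have : 2 * a * h.[e] * x = 0.
    rewrite (_ : 2*a*h.[e]*x = (h.[e]*(x+a)^+2 - h.[e]*x^+2) - h.[e]*a^+2); last by ring.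
    by rewrite E C; ring.
  move/eqP; rewrite !mulf_eq0 (negbTE two) (negbTE a0) (negbTE al0) /= => /eqP x0.
  by move: P2; rewrite x0 P0 => P2; move: e0; rewrite -P2 eqxx.
have Z2 : -a \in Sol -> #|SS (-e) (-e)| = 0%N.
  move=> /c1 C; apply/eqP; rewrite cards_eq0; apply/eqP/setP => x.
  rewrite in_set0; apply/negbTE/negP => /SSP [E P1 P2].
  have : 2 * a * h.[-e] * (x + a) = 0.
    rewrite (_ : 2*a*h.[-e]*(x+a) = (h.[-e]*(x+a)^+2 - h.[-e]*x^+2) + h.[-e]*a^+2); last by ring.
    by rewrite E C; ring.
  move/eqP; rewrite !mulf_eq0 (negbTE two) (negbTE a0) (negbTE be0) /= => /eqP x0.
  by move: P1; rewrite x0 P0 => P1; move: ne0; rewrite -P1 eqxx.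
have L1a : (0%R:F) \in Sol -> (#|SS e (-e)| <= 1)%N.
  move=> /c0 C.
  apply: (@card_le1 F F _ id (h.[e] - h.[-e]) (2 * a * h.[e])) => //.
    apply/negP => /andP [_ /eqP H]; move/eqP: H.
    by rewrite !mulf_eq0 (negbTE two) (negbTE a0) (negbTE al0).
  move=> x /SSP [E P1 P2] /=.
  have x0 : x != 0 by apply/negP => /eqP x0; move: P2; rewrite x0 P0 => P2; move: ne0; rewrite -P2 eqxx.
  have : x * ((h.[e] - h.[-e]) * x + 2 * a * h.[e]) = 0.
    rewrite (_ : x * _ = (h.[e]*(x+a)^+2 - h.[-e]*x^+2) - h.[e]*a^+2); last by ring.
    by rewrite E C; ring.
  by move/eqP; rewrite mulf_eq0 (negbTE x0) /= => /eqP.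
have L1b : -a \in Sol -> (#|SS e (-e)| <= 1)%N.
  move=> /c1 C.
  apply: (@card_le1 F F _ id (h.[e] - h.[-e]) ((h.[e] + h.[-e]) * a)) => //.
    apply/negP => /andP [/eqP H1 /eqP H2]; move: H2.
    have -> : h.[e] = h.[-e] by apply/eqP; rewrite -subr_eq0 H1.
    have -> : (h.[-e] + h.[-e]) * a = 2 * a * h.[-e] by ring.
    by move/eqP; rewrite !mulf_eq0 (negbTE two) (negbTE a0) (negbTE be0).
  move=> x /SSP [E P1 P2] /=.
  have x0 : x + a != 0 by apply/negP => /eqP x0; move: P1; rewrite x0 P0 => P1; move: e0; rewrite -P1 eqxx.
  have : (x + a) * ((h.[e] - h.[-e]) * x + (h.[e] + h.[-e]) * a) = 0.
    rewrite (_ : (x + a) * _ = (h.[e]*(x+a)^+2 - h.[-e]*x^+2) + h.[-e]*a^+2); last by ring.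
    by rewrite E C; ring.
  by move/eqP; rewrite mulf_eq0 (negbTE x0) /= => /eqP.
have Z3 : (0%R:F) \in Sol -> -a \in Sol -> #|SS e (-e)| = 0%N.
  move=> /c0 C0 /c1 C1.
  have hb : h.[-e] = - h.[e].
    have : a^+2 * (h.[e] + h.[-e]) = 0 by rewrite mulrDr -C0 C1 addNr.
    move/eqP; rewrite mulf_eq0 expf_eq0 (negbTE a0) andbF /= addr_eq0 => /eqP ->.
    by rewrite opprK.
  apply/eqP; rewrite cards_eq0; apply/eqP/setP => x.
  rewrite in_set0; apply/negbTE/negP => /SSP [E P1 P2].
  have : 2 * h.[e] * (x * (x + a)) = 0.
    rewrite (_ : _ * _ = (h.[e]*(x+a)^+2 - h.[-e]*x^+2) - a^+2 * h.[e]); last by rewrite hb; ring.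
    by rewrite E C0 subrr.
  move/eqP; rewrite !mulf_eq0 (negbTE two) (negbTE al0) /= => /orP [] /eqP x0.
    by move: P2; rewrite x0 P0 => P2; move: ne0; rewrite -P2 eqxx.
  by move: P1; rewrite x0 P0 => P1; move: e0; rewrite -P1 eqxx.
rewrite /B.
have h1 := SS_diag eM; have h2 := SS_diag (MN eM).
have h3 := SS_le2 e (-e) eM; have h4 := SS_le2 (-e) e (MN eM).
have h5 := SS22 eM; have h6 := SS22' eM.
have h7 := Bgen e eM; rewrite /B in h7.
set n1 := #|SS e e| in h1 h5 h6 h7 Z1 *.
set n2 := #|SS e (-e)| in h3 h5 h6 h7 L1a L1b Z3 *.
set n3 := #|SS (-e) e| in h4 h5 h6 h7 *.
set n4 := #|SS (-e) (-e)| in h2 h5 h6 h7 Z2 *.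
case b0 : ((0%R:F) \in Sol); case b1 : (-a \in Sol) => /=.
- have := Z1 b0; have := Z2 b1; have := Z3 b0 b1; lia.
- have := Z1 b0; have := L1a b0; lia.
- have := Z2 b1; have := L1b b1; lia.
- lia.
Qed.

Lemma block e : e \in M ->
  (B e + ((a ^+ m == e) + (a ^+ m == - e)) * (((0%R:F) \in Sol) + (-a \in Sol)) <= 5)%N.
Proof.
move=> eM; case: (eqVneq (a ^+ m) e) => H1.
  have -> : (a ^+ m == - e) = false by rewrite H1 eq_sym (negbTE (eNe eM)).
  by rewrite mul1n addnA; apply: block_aux.
case: (eqVneq (a ^+ m) (- e)) => H2.
  have := block_aux (-e) (MN eM) H2; rewrite /B opprK mul1n.
  set s := (_ + _)%N; set t := (_ + _)%N; lia.
by rewrite mul0n addn0; apply: Bgen.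
Qed.

Lemma count_sol : (#|Sol| <= ((0%R:F) \in Sol) + (-a \in Sol) +
   \sum_(e1 in M) \sum_(e2 in M) #|SS e1 e2|)%N.
Proof.
rewrite -sum1_card.
have step : forall x, x \in Sol -> (1 <= (x == 0%R) + (x == -a) +
   \sum_(e1 in M) \sum_(e2 in M) (x \in SS e1 e2))%N.
  move=> x xS; case: (eqVneq x 0) => [->|x0] //.
  case: (eqVneq x (-a)) => [->|xa] //.
  have xa0 : x + a != 0 by rewrite addr_eq0.
  rewrite (bigD1 ((x + a) ^+ m)) /=; last exact: MP.
  rewrite (bigD1 (x ^+ m)) /=; last exact: MP.
  have -> : x \in SS ((x + a) ^+ m) (x ^+ m) by rewrite inE !eqxx !andbT; move: xS; rewrite inE.
  by rewrite add0n add1n addSn.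
apply: (@leq_trans (\sum_(x in Sol) ((x == 0%R) + (x == -a) + \sum_(e1 in M) \sum_(e2 in M) (x \in SS e1 e2)))%N); first by apply: leq_sum => x xS; exact: step.
rewrite !big_split /=.
apply: leq_add; first apply: leq_add.
- rewrite big_mkcond (bigD1 0) //= eqxx big1 ?addn0; first by case: (_ \in Sol).
  by move=> i /negbTE ->; case: (_ \in Sol).
- rewrite big_mkcond (bigD1 (-a)) //= big1 ?addn0; first by rewrite eqxx; case: (_ \in Sol).
  by move=> i /negbTE ->; case: (_ \in Sol).
- rewrite exchange_big; apply: leq_sum => e1 _; rewrite exchange_big.
  apply: leq_sum => e2 _; rewrite -sum1_card big_mkcond [X in (_ <= X)%N]big_mkcond.
  apply: leq_sum => x _ /=; case: (x \in Sol); case: (x \in SS e1 e2) => //.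
Qed.

Lemma row e1 : e1 \in M ->
  (\sum_(e2 in M) #|SS e1 e2| + 4 <= #|SS e1 e1| + #|SS e1 (-e1)| + 2 * #|M|)%N.
Proof.
move=> eM; have NM := MN eM; have ne := eNe eM.
have R : (\sum_(e2 | (e2 \in M) && (e2 != e1) && (e2 != - e1)) #|SS e1 e2| <=
          \sum_(e2 | (e2 \in M) && (e2 != e1) && (e2 != - e1)) 2)%N.
  by apply: leq_sum => e2 /andP [/andP [e2M _] _]; exact: SS_le2.
have C : #|M| = (1 + (1 + \sum_(e2 | (e2 \in M) && (e2 != e1) && (e2 != - e1)) 1))%N.
  by rewrite -sum1_card (bigD1 e1) //= (bigD1 (-e1)) //= NM ne.
have D2 : (\sum_(e2 | (e2 \in M) && (e2 != e1) && (e2 != - e1)) 2 =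
          2 * \sum_(e2 | (e2 \in M) && (e2 != e1) && (e2 != - e1)) 1)%N.
  by rewrite big_distrr /=; apply: eq_bigr => i _; rewrite muln1.
rewrite (bigD1 e1) //= (bigD1 (-e1)) /=; last by rewrite NM ne.
rewrite C.
set S1 := (\sum_(e2 | (e2 \in M) && (e2 != e1) && (e2 != - e1)) #|SS e1 e2|)%N in R *.
set S2 := (\sum_(e2 | (e2 \in M) && (e2 != e1) && (e2 != - e1)) 2)%N in R D2 *.
set S3 := (\sum_(e2 | (e2 \in M) && (e2 != e1) && (e2 != - e1)) 1)%N in D2 *.
lia.
Qed.

Definition T := (\sum_(e in M) (#|SS e e| + #|SS e (-e)|))%N.

Lemma sumrows : (\sum_(e1 in M) \sum_(e2 in M) #|SS e1 e2| + 4 * #|M| <= T + 2 * #|M| * #|M|)%N.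
Proof.
have : (\sum_(e1 in M) (\sum_(e2 in M) #|SS e1 e2| + 4) <=
   \sum_(e1 in M) (#|SS e1 e1| + #|SS e1 (-e1)| + 2 * #|M|))%N.
  by apply: leq_sum => e1 H; exact: row.
rewrite /T !big_split /= !sum_nat_const.
set k := #|M|. set X := (\sum_(e1 in M) \sum_(e2 in M) #|SS e1 e2|)%N. set Y1 := (\sum_(e in M) #|SS e e|)%N. set Y2 := (\sum_(e in M) #|SS e (-e)|)%N. lia.
Qed.

Lemma diagsum : (2 * T + 2 * (((0%R:F) \in Sol) + (-a \in Sol)) <= 5 * #|M|)%N.
Proof.
set s := (((0%R:F) \in Sol) + (-a \in Sol))%N.
have ST : T = (\sum_(e in M) (#|SS (-e) (-e)| + #|SS (-e) e|))%N.
  rewrite /T (reindex_inj oppr_inj) /=; apply: eq_big => e.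
    by apply/idP/idP => H; [rewrite -(opprK e); exact: MN | exact: MN].
  by rewrite opprK.
have SB : (\sum_(e in M) B e = T + T)%N.
  rewrite {2}ST /T -big_split /=; apply: eq_bigr => e _; rewrite /B; set n1 := #|SS e e|; set n2 := #|SS e (-e)|; set n3 := #|SS (-e) e|; set n4 := #|SS (-e) (-e)|; lia.
have two_le : (2 <= \sum_(e in M) ((a ^+ m == e) + (a ^+ m == - e)))%N.
  have aM := MP a0; have naM := MN aM.
  have t1 : (1 <= \sum_(e in M) (a ^+ m == e))%N by rewrite (bigD1 (a ^+ m)) //= eqxx.
  have t2 : (1 <= \sum_(e in M) (a ^+ m == - e))%N by rewrite (bigD1 (- a ^+ m)) //= opprK eqxx.
  by rewrite big_split /=; apply: (leq_add t1 t2).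
have : (\sum_(e in M) (B e + ((a ^+ m == e) + (a ^+ m == - e)) * s) <= \sum_(e in M) 5)%N.
  by apply: leq_sum => e H; exact: block.
rewrite big_split /= -big_distrl /= sum_nat_const SB.
have := leq_mul (leqnn s) two_le.
set Z := (\sum_(i in M) ((a ^+ m == i) + (a ^+ m == - i)))%N; set k := #|M|; nia.
Qed.

Lemma final_count : (2 * #|Sol| + 8 * #|M| <= 4 * #|M| * #|M| + 5 * #|M|)%N.
Proof.
have := count_sol; have := sumrows; have := diagsum.
set X := (\sum_(e1 in M) _)%N; lia.
Qed.

End Main.

Lemma arith (n k d : nat) : (0 < d)%N -> (k <= d)%N -> (2 * n + 8 * k <= 4 * k * k + 5 * k)%N ->
  (n * 2 <= 4 * d ^ 2 - 3 * d)%N.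
Proof.
move=> d0 kd Hc.
have [t ->] : exists t, d = (k + t)%N by exists (d - k)%N; rewrite subnKC.
have tt : (t <= t * t)%N by case: t {d0 kd} => // t; rewrite leq_pmulr.
rewrite expnS expn1.
lia.
Qed.

Theorem theorem1p4 (F : finFieldType) (d : nat) (h : {poly F}) :
  odd #|F| ->
  ~~ odd d ->
  (d %| #|F|.-1)%N ->
  odd (#|F|.-1 %/ d)%N ->
  is_perm_poly ('X^2 * (h \Po 'X^(#|F|.-1 %/ d))) ->
  (2 * diff_unif ('X^2 * (h \Po 'X^(#|F|.-1 %/ d))) <= 4 * d ^ 2 - 3 * d)%N.
Proof.
move=> oddF evd dvd oddm perm.
set m := (#|F|.-1 %/ d)%N in oddm perm *.
set f := 'X^2 * (h \Po 'X^m) in perm *.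
have two := @two_nz F oddF.
have d0 : (0 < d)%N by rewrite lt0n; apply/negP => /eqP d_0; move: oddm; rewrite /m d_0 divn0.
have fE : forall x, f.[x] = fv F m h x by move=> x; rewrite /f /fv hornerM hornerXn horner_comp hornerXn.
have hnz : forall x : F, x != 0 -> h.[x ^+ m] != 0.
  move=> x x0; apply/negP => /eqP hx.
  have : f.[x] = f.[0] by rewrite !fE /fv hx mulr0 expr0n /= mul0r.
  by move/perm => /eqP; rewrite (negbTE x0).
have Mle : (#|M F m| <= d)%N.
  have root1 : forall e, e \in M F m -> e ^+ d = 1.
    move=> e /imsetP [x]; rewrite !inE => x0 ->.
    rewrite -exprM divnK //.
    have : x * x ^+ #|F|.-1 = x * 1.
      by rewrite mulr1 -exprS prednK ?expf_card // (ltnW (card_finNzRing_gt1 F)).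
    by move/(mulfI x0).
  have := @max_poly_roots F ('X^d - 1%:P) (enum (M F m)).
  rewrite size_XnsubC // -cardE ltnS; apply.
  - by rewrite -size_poly_eq0 size_XnsubC.
  - by apply/allP => e; rewrite mem_enum => eM; rewrite rootE !hornerE root1 // subrr.
  - exact: enum_uniq.
rewrite /diff_unif.
set Bd := (4 * d ^ 2 - 3 * d)%N.
suff H : (\max_(a : F | a != 0%R) \max_(c : F) diff_count f a c <= Bd %/ 2)%N.
  apply: leq_trans (_ : 2 * (Bd %/ 2) <= Bd)%N; first by rewrite leq_mul2l H orbT.
  by rewrite mulnC leq_trunc_div.
apply/bigmax_leqP => a a0; apply/bigmax_leqP => c _.
rewrite leq_divRL // /diff_count.
have -> : [set x | f.[x + a] - f.[x] == c] = Sol F m h a c.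
  by apply/setP => x; rewrite !inE !fE.
rewrite /Bd; exact: (arith _ _ _ d0 Mle (final_count F m h a c oddm two a0 hnz)).
Qed.
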